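(* Let $(Y_n)$ satisfy Condition 1 with constant $\alpha$, and fix an integer $a\ge1$. For $i\ge1$ let $\pi_i(n)$ be the probability that, in the leader election process started with $n$ players (stopped as soon as at most $a$ players remain), there is some round after which exactly $i$ players remain (i.e. $N_k=i$ for some $k$ up to the stopping time). Then for every $i\ge1$ there is a continuous, locally Lipschitz function $\psi_i$ on $(0,\infty)$ with $\psi_i(\alpha t)=\psi_i(t)$ such that $\pi_i(n)=\psi_i(n)+o(1)$ as $n\to\infty$.
   Context: Condition 1: $(Y_n)_{n\ge1}$ is a sequence of random variables with $1\le Y_n\le n$ for all $n$ and $\Pr(Y_n=n)<1$ for $n\ge2$, such that: (i) $\Pr(Y_n\le k)\ge\Pr(Y_{n+1}\le k)$ for all $n,k\ge1$; (ii) there are constants $\alpha\in(0,1)$, $\varepsilon>0$ and $\delta_n=O((\log n)^{-1-\varepsilon})$ with $\mathbb E Y_{n+1}-\mathbb E Y_n=\alpha+O(\delta_n)$; (iii) $\Pr(|Y_n-\alpha n|>\delta_n n)=O(n^{-2-\varepsilon})$. Leader election process: $N_0=n$ and $(N_k)$ is the Markov chain on $\{1,2,\dots\}$ with $\Pr(N_{k+1}=j\mid N_k=i)=\Pr(Y_i=j)$. *)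

(* Defs.v *)
From Stdlib Require Import Reals Lra Lia Arith.
Open Scope R_scope.

(* The law of Y_n is encoded by its probability mass function:
   p n j = Pr(Y_n = j).  *)

Definition is_pmf_family (p : nat -> nat -> R) : Prop :=
  forall n : nat, (1 <= n)%nat ->
    (forall j, 0 <= p n j) /\
    p n 0%nat = 0 /\
    (forall j, (n < j)%nat -> p n j = 0) /\
    sum_f_R0 (p n) n = 1.

Definition cdf (p : nat -> nat -> R) (n k : nat) : R := sum_f_R0 (p n) k.

Definition mean (p : nat -> nat -> R) (n : nat) : R :=
  sum_f_R0 (fun j => INR j * p n j) n.

Definition dev_prob (p : nat -> nat -> R) (alpha : R) (delta : nat -> R) (n : nat) : R :=
  sum_f_R0 (fun j => if Rlt_dec (delta n * INR n) (Rabs (INR j - alpha * INR n))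
                     then p n j else 0) n.

Definition condition1 (p : nat -> nat -> R) (alpha : R) : Prop :=
  is_pmf_family p /\
  (forall n, (2 <= n)%nat -> p n n < 1) /\
  (forall n k, (1 <= n)%nat -> (1 <= k)%nat -> cdf p n k >= cdf p (S n) k) /\
  0 < alpha < 1 /\
  exists (eps : R) (delta : nat -> R), 0 < eps /\
    (exists C N, (2 <= N)%nat /\ forall n, (N <= n)%nat ->
        Rabs (delta n) <= C * Rpower (ln (INR n)) (- 1 - eps)) /\
    (exists C N, forall n, (N <= n)%nat ->
        Rabs (mean p (S n) - mean p n - alpha) <= C * Rabs (delta n)) /\
    (exists C N, (1 <= N)%nat /\ forall n, (N <= n)%nat ->
        dev_prob p alpha delta n <= C * Rpower (INR n) (- 2 - eps)).

(* visit_within p a i K m : probability that the leader election process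
   started from N_0 = m, stopped as soon as at most a players remain,
   has N_k = i for some k <= min(T, K) (T the stopping time).
   This is the finite path-sum, written recursively via the Markov property. *)
Fixpoint visit_within (p : nat -> nat -> R) (a i : nat) (K : nat) (m : nat) : R :=
  if Nat.eqb m i then 1
  else match K with
       | O => 0
       | S K' => if Nat.leb m a then 0
                 else sum_f_R0 (fun j => p m j * visit_within p a i K' j) m
       end.

Definition locally_lipschitz_pos (psi : R -> R) : Prop :=
  forall t, 0 < t -> exists r L, 0 < r < t /\ 0 <= L /\
    forall x y, Rabs (x - t) < r -> Rabs (y - t) < r ->
      Rabs (psi x - psi y) <= L * Rabs (x - y).

(* Main.v *)
Require Import Defs.
From Stdlib Require Import Reals Lra Lia Arith ZArith ClassicalEpsilon.
Open Scope R_scope.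

Lemma lim_le_ev (U : nat -> R) l c N :
  Un_cv U l -> (forall n, (N <= n)%nat -> U n <= c) -> l <= c.
Proof.
  intros Hc HU. destruct (Rle_dec l c) as [H|H]; auto.
  assert (Hp : 0 < l - c) by lra.
  destruct (Hc _ Hp) as [M HM].
  specialize (HM (max N M) ltac:(lia)). specialize (HU (max N M) ltac:(lia)).
  unfold Rdist in HM. apply Rabs_def2 in HM. lra.
Qed.

Lemma lim_ge_ev (U : nat -> R) l c N :
  Un_cv U l -> (forall n, (N <= n)%nat -> c <= U n) -> c <= l.
Proof.
  intros Hc HU. destruct (Rle_dec c l) as [H|H]; auto.
  assert (Hp : 0 < c - l) by lra.
  destruct (Hc _ Hp) as [M HM].
  specialize (HM (max N M) ltac:(lia)). specialize (HU (max N M) ltac:(lia)).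
  unfold Rdist in HM. apply Rabs_def2 in HM. lra.
Qed.

Lemma sum_le (u v : nat -> R) n :
  (forall j, (j <= n)%nat -> u j <= v j) -> sum_f_R0 u n <= sum_f_R0 v n.
Proof.
  induction n; intros H; simpl.
  - apply H; lia.
  - apply Rplus_le_compat; [apply IHn; intros; apply H; lia | apply H; lia].
Qed.

Lemma sum_nonneg (u : nat -> R) n :
  (forall j, (j <= n)%nat -> 0 <= u j) -> 0 <= sum_f_R0 u n.
Proof.
  induction n; intros H; simpl.
  - apply H; lia.
  - assert (0 <= sum_f_R0 u n) by (apply IHn; intros; apply H; lia).
    specialize (H (S n) (le_n _)). lra.
Qed.

Lemma sum_ext (u v : nat -> R) n :
  (forall j, (j <= n)%nat -> u j = v j) -> sum_f_R0 u n = sum_f_R0 v n.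
Proof.
  induction n; intros H; simpl.
  - apply H; lia.
  - rewrite IHn by (intros; apply H; lia). rewrite H by lia. reflexivity.
Qed.

Lemma sum_plus (u v : nat -> R) n :
  sum_f_R0 (fun j => u j + v j) n = sum_f_R0 u n + sum_f_R0 v n.
Proof. induction n; simpl; [reflexivity| rewrite IHn; ring]. Qed.

Lemma sum_scal (u : nat -> R) c n :
  sum_f_R0 (fun j => c * u j) n = c * sum_f_R0 u n.
Proof. induction n; simpl; [reflexivity| rewrite IHn; ring]. Qed.

Lemma sum_minus (u v : nat -> R) n :
  sum_f_R0 (fun j => u j - v j) n = sum_f_R0 u n - sum_f_R0 v n.
Proof. induction n; simpl; [reflexivity| rewrite IHn; ring]. Qed.

Lemma sum_const c n : sum_f_R0 (fun _ => c) n = INR (S n) * c.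
Proof. induction n; simpl sum_f_R0; [simpl; ring| rewrite IHn; rewrite !S_INR; ring]. Qed.

Lemma sum_abs (u : nat -> R) n : Rabs (sum_f_R0 u n) <= sum_f_R0 (fun j => Rabs (u j)) n.
Proof.
  induction n; simpl; [lra|]. eapply Rle_trans; [apply Rabs_triang|]. lra.
Qed.

Lemma sum_mono_n (u : nat -> R) m n :
  (forall j, 0 <= u j) -> (m <= n)%nat -> sum_f_R0 u m <= sum_f_R0 u n.
Proof.
  intros H Hmn. induction Hmn; [lra|]. simpl. specialize (H (S m0)). lra.
Qed.

Lemma abel (q f : nat -> R) M :
  sum_f_R0 (fun j => q j * f j) (S M) =
  sum_f_R0 q (S M) * f (S M) - sum_f_R0 (fun j => sum_f_R0 q j * (f (S j) - f j)) M.
Proof.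
  induction M.
  - simpl. ring.
  - change (sum_f_R0 (fun j => q j * f j) (S (S M))) with
      (sum_f_R0 (fun j => q j * f j) (S M) + q (S (S M)) * f (S (S M))).
    rewrite IHM.
    change (sum_f_R0 q (S (S M))) with (sum_f_R0 q (S M) + q (S (S M))).
    change (sum_f_R0 (fun j => sum_f_R0 q j * (f (S j) - f j)) (S M)) with
      (sum_f_R0 (fun j => sum_f_R0 q j * (f (S j) - f j)) M +
       sum_f_R0 q (S M) * (f (S (S M)) - f (S M))).
    ring.
Qed.

Lemma cv_sum (c : nat -> R) (u : nat -> nat -> R) (l : nat -> R) n :
  (forall j, (j <= n)%nat -> Un_cv (fun K => u K j) (l j)) ->
  Un_cv (fun K => sum_f_R0 (fun j => c j * u K j) n) (sum_f_R0 (fun j => c j * l j) n).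
Proof.
  induction n; intros H; simpl.
  - apply CV_mult; [intros e He; exists 0%nat; intros; unfold Rdist; rewrite Rminus_diag, Rabs_R0; lra|].
    apply H; lia.
  - apply CV_plus; [apply IHn; intros; apply H; lia|].
    apply CV_mult; [intros e He; exists 0%nat; intros; unfold Rdist; rewrite Rminus_diag, Rabs_R0; lra|].
    apply H; lia.
Qed.

Lemma cv_shift (U : nat -> R) l : Un_cv U l -> Un_cv (fun K => U (S K)) l.
Proof.
  intros H e He. destruct (H e He) as [N HN]. exists N. intros n Hn. apply HN. lia.
Qed.

Lemma cv_unshift (U : nat -> R) l : Un_cv (fun K => U (S K)) l -> Un_cv U l.
Proof.
  intros H e He. destruct (H e He) as [N HN]. exists (S N). intros n Hn.
  destruct n; [lia|]. apply HN. lia.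
Qed.

Definition fl (x : R) : nat := Z.to_nat (Int_part x).

Lemma fl_spec x : 0 <= x -> INR (fl x) <= x < INR (fl x) + 1.
Proof.
  intros Hx. destruct (base_Int_part x) as [H1 H2].
  assert (Hz : (0 <= Int_part x)%Z).
  { assert (-1 < IZR (Int_part x)) by lra.
    apply lt_IZR in H. lia. }
  unfold fl. rewrite INR_IZR_INZ, Z2Nat.id by exact Hz. lra.
Qed.

Lemma fl_INR n : fl (INR n) = n.
Proof.
  destruct (fl_spec (INR n) (pos_INR n)) as [H1 H2].
  destruct (Nat.lt_trichotomy (fl (INR n)) n) as [Hl|[He|Hg]]; auto.
  - assert (INR (S (fl (INR n))) <= INR n) by (apply le_INR; lia).
    rewrite S_INR in H. lra.
  - apply lt_INR in Hg. lra.
Qed.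

Lemma fl_mono x y : 0 <= x -> x <= y -> (fl x <= fl y)%nat.
Proof.
  intros Hx Hxy. destruct (fl_spec x Hx) as [A1 A2]. destruct (fl_spec y ltac:(lra)) as [B1 B2].
  destruct (Nat.le_gt_cases (fl x) (fl y)) as [H|H]; auto.
  assert (HH : INR (S (fl y)) <= INR (fl x)) by (apply le_INR; lia).
  rewrite S_INR in HH. lra.
Qed.

Lemma Rabs_le_between x b : Rabs x <= b -> - b <= x <= b.
Proof.
  intros H. pose proof (Rle_abs x). pose proof (Rle_abs (- x)). rewrite Rabs_Ropp in H1. lra.
Qed.

Lemma exp_le_mono x y : x <= y -> exp x <= exp y.
Proof. intros [H|H]; [left; apply exp_increasing; auto| subst; lra]. Qed.

Lemma ln_le_mono x y : 0 < x -> x <= y -> ln x <= ln y.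
Proof. intros Hx [H|H]; [left; apply ln_increasing; auto| subst; lra]. Qed.

Lemma ln_ge_1m x : 0 < x -> 1 - / x <= ln x.
Proof.
  intros Hx. pose proof (exp_ineq1_le (ln (/ x))). rewrite exp_ln in H by (apply Rinv_0_lt_compat; lra).
  rewrite ln_Rinv in H by lra. lra.
Qed.

Lemma rp_pos x y : 0 < Rpower x y.
Proof. unfold Rpower. apply exp_pos. Qed.

Lemma rp_dec x y e : 0 < x -> x <= y -> 0 <= e -> Rpower y (- e) <= Rpower x (- e).
Proof.
  intros Hx Hxy He. unfold Rpower. apply exp_le_mono.
  assert (ln x <= ln y) by (apply ln_le_mono; auto). nra.
Qed.

Lemma rp_small e eta : 0 < e -> 0 < eta -> exists X, 0 < X /\ forall x, X <= x -> Rpower x (- e) <= eta.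
Proof.
  intros He Heta. exists (exp (- ln eta / e)). split; [apply exp_pos|].
  intros x Hx. unfold Rpower.
  assert (Hx0 : 0 < x) by (pose proof (exp_pos (- ln eta / e)); lra).
  apply ln_le_mono in Hx; [|apply exp_pos]. rewrite ln_exp in Hx.
  rewrite <- (exp_ln eta) by lra. apply exp_le_mono.
  assert (- ln eta <= e * ln x).
  { apply Rmult_le_compat_l with (r := e) in Hx; [|lra].
    unfold Rdiv in Hx. rewrite <- Rmult_assoc, (Rmult_comm e), Rmult_assoc, Rinv_r, Rmult_1_r in Hx by lra. lra. }
  lra.
Qed.

Lemma rp_inv x : 0 < x -> Rpower x (-1) = / x.
Proof. intros Hx. replace (-1) with (- (1)) by ring. rewrite Rpower_Ropp, Rpower_1 by auto. reflexivity. Qed.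

Lemma rp_m1e x e : 0 < x -> Rpower x (-1 - e) = Rpower x (- e) / x.
Proof.
  intros Hx. replace (-1 - e) with (-1 + - e) by ring. rewrite Rpower_plus, rp_inv by auto.
  unfold Rdiv. ring.
Qed.

Lemma rp_m2e x e : 0 < x -> Rpower x (-2 - e) = Rpower x (- e) / (x * x).
Proof.
  intros Hx. replace (-2 - e) with (-1 + (-1 - e)) by ring. rewrite Rpower_plus, rp_inv, rp_m1e by auto.
  field. lra.
Qed.

Lemma bern u v e : 0 < u -> u <= v -> 0 < e ->
  e * (v - u) * Rpower v (-1 - e) <= Rpower u (- e) - Rpower v (- e).
Proof.
  intros Hu Huv He. rewrite rp_m1e by lra.
  assert (Hd : (v - u) / v <= ln v - ln u).
  { assert (Hl : ln (v * / u) = ln v - ln u).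
    { rewrite ln_mult, ln_Rinv; try ring; try lra. apply Rinv_0_lt_compat; lra. }
    rewrite <- Hl.
    pose proof (ln_ge_1m (v * / u) ltac:(apply Rmult_lt_0_compat; [lra| apply Rinv_0_lt_compat; lra])).
    rewrite Rinv_mult, Rinv_inv in H. replace ((v - u) / v) with (1 - / v * u) by (field; lra). lra. }
  unfold Rpower.
  replace (- e * ln u) with (- e * ln v + e * (ln v - ln u)) by ring.
  rewrite exp_plus.
  pose proof (exp_ineq1_le (e * (ln v - ln u))).
  pose proof (exp_pos (- e * ln v)).
  assert (e * ((v - u) / v) <= e * (ln v - ln u)) by (apply Rmult_le_compat_l; lra).
  replace (e * (v - u) * (exp (- e * ln v) / v)) with (exp (- e * ln v) * (e * ((v - u) / v))) by (field; lra).
  nra.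
Qed.

Definition Phi (A B C e : R) (x : R) : R :=
  A * Rpower (ln x) (- e) + B * Rpower x (- e) + C / x.

Section Pot.
Variables (A B C e : R).
Hypotheses (HA : 0 <= A) (HB : 0 <= B) (HC : 0 <= C) (He : 0 < e).

Lemma Phi_dec x y : 2 <= x -> x <= y -> Phi A B C e y <= Phi A B C e x.
Proof.
  intros Hx Hxy. unfold Phi.
  assert (ln 2 > 0) by (pose proof ln_lt_2; lra).
  assert (ln 2 <= ln x) by (apply ln_le_mono; lra).
  assert (ln x <= ln y) by (apply ln_le_mono; lra).
  assert (Rpower (ln y) (- e) <= Rpower (ln x) (- e)) by (apply rp_dec; lra).
  assert (Rpower y (- e) <= Rpower x (- e)) by (apply rp_dec; lra).
  assert (C / y <= C / x).
  { unfold Rdiv. apply Rmult_le_compat_l; auto. apply Rinv_le_contravar; lra. }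
  nra.
Qed.

Lemma Phi_nonneg x : 2 <= x -> 0 <= Phi A B C e x.
Proof.
  intros Hx. unfold Phi. pose proof (rp_pos (ln x) (- e)). pose proof (rp_pos x (- e)).
  assert (0 <= C / x) by (unfold Rdiv; apply Rmult_le_pos; [lra| left; apply Rinv_0_lt_compat; lra]).
  nra.
Qed.

Lemma Phi_small eta : 0 < eta -> exists X, 2 <= X /\ forall x, X <= x -> Phi A B C e x <= eta.
Proof.
  intros Heta.
  set (t := eta / (3 * (A + B + C + 1))).
  assert (Ht : 0 < t) by (unfold t; apply Rdiv_lt_0_compat; lra).
  destruct (rp_small e t He Ht) as [X1 [HX1 H1]].
  exists (Rmax 2 (Rmax (exp X1) (Rmax X1 (/ t)))).
  split; [apply Rmax_l|]. intros x Hx.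
  assert (H2x : 2 <= x) by (eapply Rle_trans; [apply Rmax_l| exact Hx]).
  assert (Hex : exp X1 <= x) by (eapply Rle_trans; [|exact Hx]; eapply Rle_trans; [|apply Rmax_r]; apply Rmax_l).
  assert (HXx : X1 <= x) by (eapply Rle_trans; [|exact Hx]; eapply Rle_trans; [|apply Rmax_r];
                         eapply Rle_trans; [|apply Rmax_r]; apply Rmax_l).
  assert (Htx : / t <= x) by (eapply Rle_trans; [|exact Hx]; eapply Rle_trans; [|apply Rmax_r];
                         eapply Rle_trans; [|apply Rmax_r]; apply Rmax_r).
  assert (Hl : X1 <= ln x) by (rewrite <- (ln_exp X1); apply ln_le_mono; [apply exp_pos| auto]).
  specialize (H1 _ Hl) as Hp1. specialize (H1 _ HXx) as Hp2.
  assert (Hp3 : / x <= t).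
  { rewrite <- (Rinv_inv t). apply Rinv_le_contravar; [apply Rinv_0_lt_compat; auto| auto]. }
  unfold Phi. unfold Rdiv.
  assert (A * Rpower (ln x) (- e) <= A * t) by (apply Rmult_le_compat_l; auto).
  assert (B * Rpower x (- e) <= B * t) by (apply Rmult_le_compat_l; auto).
  assert (C * / x <= C * t) by (apply Rmult_le_compat_l; auto).
  assert ((A + B + C) * t <= eta).
  { apply Rle_trans with ((A+B+C+1) * t).
    - apply Rmult_le_compat_r; lra.
    - unfold t. replace ((A + B + C + 1) * (eta / (3 * (A + B + C + 1)))) with (eta / 3) by (field; lra). lra. }
  lra.
Qed.

End Pot.

Lemma nat_above x : exists N : nat, forall n, (N <= n)%nat -> x <= INR n.
Proof.
  destruct (Rle_dec x 0) as [H|H].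
  - exists 0%nat. intros. pose proof (pos_INR n). lra.
  - exists (S (fl x)). intros n Hn. destruct (fl_spec x ltac:(lra)).
    apply le_INR in Hn. rewrite S_INR in Hn. lra.
Qed.

Lemma rp_gt1 g e : 0 < g < 1 -> 0 < e -> 1 < Rpower g (- e).
Proof.
  intros Hg He. unfold Rpower.
  assert (ln g < 0) by (rewrite <- ln_1; apply ln_increasing; lra).
  assert (0 < - e * ln g) by nra.
  pose proof (exp_ineq1 (- e * ln g) ltac:(lra)). lra.
Qed.

Lemma potential (g e C1 c : R) (N1 : nat) (delta : nat -> R) :
  0 < g < 1 -> 0 < e -> 0 <= c ->
  (forall n, (N1 <= n)%nat -> Rabs (delta n) <= C1 * Rpower (ln (INR n)) (-1 - e)) ->
  exists A B C N, 0 <= A /\ 0 <= B /\ 0 <= C /\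
   forall n, (N <= n)%nat ->
     c * (Rabs (delta n) + Rpower (INR n) (- e) + / INR n)
       <= Phi A B C e (g * INR n) - Phi A B C e (INR n).
Proof.
  intros Hg He Hc Hd.
  assert (Hlg : ln g < 0) by (rewrite <- ln_1; apply ln_increasing; lra).
  pose proof (rp_gt1 g e Hg He) as Hge.
  exists (c * Rabs C1 / (e * (- ln g))), (c / (Rpower g (- e) - 1)), (c / (/ g - 1)).
  destruct (nat_above (2 / g)) as [N2 HN2].
  exists (max N1 N2).
  assert (Hig : 1 < / g).
  { rewrite <- Rinv_1. apply Rinv_lt_contravar; lra. }
  repeat split.
  - unfold Rdiv. apply Rmult_le_pos; [apply Rmult_le_pos; [lra| apply Rabs_pos]|].
    left. apply Rinv_0_lt_compat. nra.
  - unfold Rdiv. apply Rmult_le_pos; [lra|]. left. apply Rinv_0_lt_compat. lra.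
  - unfold Rdiv. apply Rmult_le_pos; [lra|]. left. apply Rinv_0_lt_compat. lra.
  - intros n Hn.
    assert (Hn2 : 2 / g <= INR n) by (apply HN2; lia).
    assert (Hgn : 2 <= g * INR n).
    { apply Rmult_le_compat_l with (r := g) in Hn2; [|lra].
      replace (g * (2 / g)) with 2 in Hn2 by (field; lra). lra. }
    assert (Hnpos : 0 < INR n) by nra.
    assert (Hgnn : g * INR n <= INR n) by nra.
    assert (Hl2 : 0 < ln (g * INR n)) by (pose proof ln_lt_2; pose proof (ln_le_mono 2 _ ltac:(lra) Hgn); lra).
    assert (Hlm : ln (g * INR n) <= ln (INR n)) by (apply ln_le_mono; lra).
    assert (Hlgn : ln (INR n) - ln (g * INR n) = - ln g) by (rewrite ln_mult by lra; ring).
    pose proof (bern (ln (g * INR n)) (ln (INR n)) e Hl2 Hlm He) as Hb.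
    rewrite Hlgn in Hb.
    specialize (Hd n ltac:(lia)).
    pose proof (rp_pos (ln (INR n)) (-1 - e)) as Hrp.
    assert (Hd' : Rabs (delta n) <= Rabs C1 * Rpower (ln (INR n)) (-1 - e)).
    { eapply Rle_trans; [exact Hd|]. apply Rmult_le_compat_r; [lra| apply RRle_abs]. }
    unfold Phi.
    rewrite <- (Rpower_mult_distr g (INR n)) by lra.
    set (r1 := Rpower (ln (INR n)) (-1 - e)) in *.
    set (re := Rpower (INR n) (- e)).
    set (ge := Rpower g (- e)) in *.
    assert (T1 : c * Rabs (delta n) <= c * Rabs C1 / (e * - ln g) *
              (Rpower (ln (g * INR n)) (- e) - Rpower (ln (INR n)) (- e))).
    { apply Rle_trans with (c * Rabs C1 / (e * - ln g) * (e * - ln g * r1)).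
      - replace (c * Rabs C1 / (e * - ln g) * (e * - ln g * r1)) with (c * (Rabs C1 * r1))
          by (field; nra). apply Rmult_le_compat_l; lra.
      - apply Rmult_le_compat_l; [| lra].
        unfold Rdiv. apply Rmult_le_pos; [apply Rmult_le_pos; [lra| apply Rabs_pos]|].
        left. apply Rinv_0_lt_compat. nra. }
    assert (T2 : c * re = c / (ge - 1) * (ge * re - re)) by (field; lra).
    assert (T3 : c * / INR n = c / (/ g - 1) * (/ (g * INR n) - / INR n)) by (field; split; lra).
    nra.
Qed.

Lemma sum_cut (u : nat -> R) j N : (j <= N)%nat ->
  sum_f_R0 (fun k => if Nat.leb k j then u k else 0) N = sum_f_R0 u j.
Proof.
  intros H. induction H.
  - apply sum_ext. intros k Hk. destruct (Nat.leb_spec k j); [reflexivity| lia].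
  - rewrite tech5, IHle. destruct (Nat.leb_spec (S m) j); [lia| ring].
Qed.

Lemma sum_split_ite (u : nat -> R) j N :
  sum_f_R0 u N = sum_f_R0 (fun k => if Nat.leb k j then u k else 0) N
               + sum_f_R0 (fun k => if Nat.leb k j then 0 else u k) N.
Proof.
  rewrite <- sum_plus. apply sum_ext. intros k _. destruct (Nat.leb k j); ring.
Qed.

Section LE.
Variables (p : nat -> nat -> R) (alpha : R) (a i : nat) (pi : nat -> R).
Hypothesis Hpmf : is_pmf_family p.
Hypothesis Hi : (1 <= i)%nat.
Hypothesis Hpi : forall n, (1 <= n)%nat -> Un_cv (fun K => visit_within p a i K n) (pi n).

Definition ff (n : nat) : R := match n with O => 0 | S _ => pi n end.

Lemma vw_bounds K m : 0 <= visit_within p a i K m <= 1.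
Proof.
  revert m. induction K; intros m; simpl.
  - destruct (Nat.eqb m i); lra.
  - destruct (Nat.eqb m i); [lra|]. destruct (Nat.leb_spec m a); [lra|].
    destruct (Hpmf m ltac:(lia)) as [H0 [H1 [H2 H3]]].
    split.
    + apply sum_nonneg. intros j _. specialize (H0 j). specialize (IHK j). nra.
    + rewrite <- H3. apply sum_le. intros j _. specialize (H0 j). specialize (IHK j). nra.
Qed.

Lemma vw_zero K : visit_within p a i K 0 = 0.
Proof.
  destruct i as [|i0]; [lia|]. destruct K; reflexivity.
Qed.

Lemma ff_cv j : Un_cv (fun K => visit_within p a i K j) (ff j).
Proof.
  destruct j.
  - simpl. intros e He. exists 0%nat. intros. rewrite vw_zero. unfold Rdist. rewrite Rminus_diag, Rabs_R0. lra.
  - apply Hpi. lia.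
Qed.

Lemma ff_bounds n : 0 <= ff n <= 1.
Proof.
  split.
  - apply (lim_ge_ev _ _ 0 0 (ff_cv n)). intros. apply vw_bounds.
  - apply (lim_le_ev _ _ 1 0 (ff_cv n)). intros. apply vw_bounds.
Qed.

Lemma ff_rec m : (a < m)%nat -> m <> i -> ff m = sum_f_R0 (fun j => p m j * ff j) m.
Proof.
  intros Ham Hmi.
  assert (H1 : Un_cv (fun K => visit_within p a i (S K) m) (ff m)) by exact (cv_shift (fun K => visit_within p a i K m) _ (ff_cv m)).
  assert (H2 : Un_cv (fun K => visit_within p a i (S K) m) (sum_f_R0 (fun j => p m j * ff j) m)).
  { assert (E : forall K, visit_within p a i (S K) m = sum_f_R0 (fun j => p m j * visit_within p a i K j) m).
    { intros K. simpl. destruct (Nat.eqb_spec m i); [lia|]. destruct (Nat.leb_spec m a); [lia|]. reflexivity. }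
    intros e He. destruct (cv_sum (p m) (fun K j => visit_within p a i K j) ff m
                      (fun j _ => ff_cv j) e He) as [N HN].
    exists N. intros n Hn. rewrite E. apply HN; auto. }
  eapply UL_sequence; eauto.
Qed.

Definition F (m j : nat) : R := sum_f_R0 (p m) j.

Lemma F_bounds m j : (1 <= m)%nat -> 0 <= F m j <= 1.
Proof.
  intros Hm. destruct (Hpmf m Hm) as [H0 [H1 [H2 H3]]]. unfold F. split.
  - apply sum_nonneg. auto.
  - destruct (Nat.le_gt_cases j m).
    + rewrite <- H3. apply sum_mono_n; auto.
    + rewrite <- H3. replace (sum_f_R0 (p m) j) with (sum_f_R0 (fun k => if Nat.leb k m then p m k else 0) j).
      * rewrite sum_cut by lia. lra.
      * apply sum_ext. intros k Hk. destruct (Nat.leb_spec k m); auto. rewrite H2 by lia. reflexivity.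
Qed.

Lemma F_top m : (1 <= m)%nat -> F m (S m) = 1.
Proof.
  intros Hm. destruct (Hpmf m Hm) as [H0 [H1 [H2 H3]]]. unfold F. simpl. rewrite H3, H2 by lia. ring.
Qed.

Lemma diff_id (h : nat -> R) n : (1 <= n)%nat ->
  sum_f_R0 (fun j => p (S n) j * h j) (S n) - sum_f_R0 (fun j => p n j * h j) n =
  sum_f_R0 (fun j => (F n j - F (S n) j) * (h (S j) - h j)) n.
Proof.
  intros Hn.
  assert (E : sum_f_R0 (fun j => p n j * h j) n = sum_f_R0 (fun j => p n j * h j) (S n)).
  { simpl. destruct (Hpmf n Hn) as [H0 [H1 [H2 H3]]]. rewrite H2 by lia. ring. }
  rewrite E, !abel. fold (F (S n) (S n)). fold (F n (S n)).
  rewrite F_top by lia.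
  assert (Hf : F (S n) (S n) = 1) by (unfold F; destruct (Hpmf (S n) ltac:(lia)) as [_ [_ [_ H3]]]; exact H3).
  rewrite Hf.
  replace (sum_f_R0 (fun j => (F n j - F (S n) j) * (h (S j) - h j)) n) with
    (sum_f_R0 (fun j => sum_f_R0 (p n) j * (h (S j) - h j)) n -
     sum_f_R0 (fun j => sum_f_R0 (p (S n)) j * (h (S j) - h j)) n).
  - ring.
  - rewrite <- sum_minus. apply sum_ext. intros. unfold F. ring.
Qed.

Lemma mean_diff n : (1 <= n)%nat ->
  mean p (S n) - mean p n = sum_f_R0 (fun j => F n j - F (S n) j) n.
Proof.
  intros Hn. unfold mean.
  rewrite (sum_ext (fun j => INR j * p (S n) j) (fun j => p (S n) j * INR j)) by (intros; ring).
  rewrite (sum_ext (fun j => INR j * p n j) (fun j => p n j * INR j)) by (intros; ring).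
  rewrite diff_id by auto. apply sum_ext. intros. rewrite S_INR. ring.
Qed.

Hypothesis Hmono : forall n k, (1 <= n)%nat -> (1 <= k)%nat -> cdf p n k >= cdf p (S n) k.

Lemma w_nonneg n j : (1 <= n)%nat -> 0 <= F n j - F (S n) j.
Proof.
  intros Hn. destruct j.
  - unfold F. simpl. destruct (Hpmf n Hn) as [_ [H1 _]]. destruct (Hpmf (S n) ltac:(lia)) as [_ [H1' _]].
    rewrite H1, H1'. lra.
  - specialize (Hmono n (S j) Hn ltac:(lia)). unfold cdf in Hmono. unfold F. lra.
Qed.

Variable delta : nat -> R.
Definition dv n := dev_prob p alpha delta n.

Lemma ite_nonneg m k : (1 <= m)%nat ->
  0 <= (if Rlt_dec (delta m * INR m) (Rabs (INR k - alpha * INR m)) then p m k else 0).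
Proof.
  intros Hm. destruct (Rlt_dec _ _); [|lra]. destruct (Hpmf m Hm) as [H0 _]. apply H0.
Qed.

Lemma dv_nonneg m : (1 <= m)%nat -> 0 <= dv m.
Proof. intros Hm. unfold dv, dev_prob. apply sum_nonneg. intros. apply ite_nonneg; auto. Qed.

Lemma low_tail n j : (1 <= n)%nat -> (j <= n)%nat ->
  INR j + delta n * INR n < alpha * INR n -> F n j <= dv n.
Proof.
  intros Hn Hj Hlt. unfold F. rewrite <- (sum_cut (p n) j n Hj). unfold dv, dev_prob.
  apply sum_le. intros k Hk. destruct (Nat.leb_spec k j) as [Hkj|Hkj].
  - destruct (Rlt_dec _ _) as [H|H]; [lra|]. exfalso. apply H.
    apply le_INR in Hkj. rewrite <- Rabs_Ropp. eapply Rlt_le_trans; [| apply Rle_abs]. lra.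
  - apply ite_nonneg; auto.
Qed.

Lemma high_tail n j : (1 <= n)%nat -> (j <= n)%nat ->
  alpha * INR (S n) + delta (S n) * INR (S n) < INR (S j) -> 1 - F (S n) j <= dv (S n).
Proof.
  intros Hn Hj Hlt.
  assert (Htot : sum_f_R0 (p (S n)) (S n) = 1) by (destruct (Hpmf (S n) ltac:(lia)) as [_ [_ [_ H3]]]; exact H3).
  unfold F. rewrite <- (sum_cut (p (S n)) j (S n)) by lia.
  rewrite <- Htot at 1. rewrite (sum_split_ite (p (S n)) j (S n)).
  match goal with |- ?A + ?B - ?A <= _ => replace (A + B - A) with B by ring end.
  unfold dv, dev_prob. apply sum_le. intros k Hk. destruct (Nat.leb_spec k j) as [Hkj|Hkj].
  - apply ite_nonneg; lia.
  - destruct (Rlt_dec _ _) as [H|H]; [lra|]. exfalso. apply H.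
    assert (INR (S j) <= INR k) by (apply le_INR; lia).
    eapply Rlt_le_trans; [| apply Rle_abs]. lra.
Qed.

Definition D j := Rabs (ff (S j) - ff j).

Lemma D_le1 j : D j <= 1.
Proof.
  unfold D. pose proof (ff_bounds j). pose proof (ff_bounds (S j)).
  apply Rabs_le. lra.
Qed.

Lemma stepA n G : (1 <= n)%nat -> (a < n)%nat -> n <> i -> S n <> i -> 0 <= G ->
  (forall j, (j <= n)%nat -> alpha * INR n <= INR j + delta n * INR n ->
       INR (S j) <= alpha * INR (S n) + delta (S n) * INR (S n) -> D j <= G) ->
  D n <= (mean p (S n) - mean p n) * G + INR (S n) * (dv n + dv (S n)).
Proof.
  intros Hn Han Hni HSni HG Hgood.
  assert (E : ff (S n) - ff n = sum_f_R0 (fun j => (F n j - F (S n) j) * (ff (S j) - ff j)) n).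
  { rewrite <- diff_id by auto. rewrite <- !ff_rec by (auto; lia). reflexivity. }
  unfold D at 1. rewrite E. eapply Rle_trans; [apply sum_abs|].
  rewrite mean_diff by auto.
  rewrite <- sum_const, Rmult_comm, <- sum_scal, <- sum_plus.
  apply sum_le. intros j Hj.
  pose proof (w_nonneg n j Hn) as Hw.
  rewrite Rabs_mult, (Rabs_pos_eq _ Hw). fold (D j).
  pose proof (D_le1 j). pose proof (dv_nonneg n Hn). pose proof (dv_nonneg (S n) ltac:(lia)).
  pose proof (F_bounds n j Hn). pose proof (F_bounds (S n) j ltac:(lia)).
  assert (0 <= D j) by (unfold D; apply Rabs_pos).
  destruct (Rlt_dec (INR j + delta n * INR n) (alpha * INR n)) as [Hl|Hl].
  - pose proof (low_tail n j Hn Hj Hl). nra.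
  - destruct (Rlt_dec (alpha * INR (S n) + delta (S n) * INR (S n)) (INR (S j))) as [Hh|Hh].
    + pose proof (high_tail n j Hn Hj Hh). nra.
    + assert (D j <= G) by (apply Hgood; auto; lra). nra.
Qed.

Lemma stepB m r G : (a < m)%nat -> m <> i -> 0 <= G ->
  (forall j, (j <= m)%nat -> Rabs (INR j - alpha * INR m) <= delta m * INR m ->
      Rabs (ff j - ff r) <= G) ->
  Rabs (ff m - ff r) <= G + dv m.
Proof.
  intros Ham Hmi HG Hgood.
  assert (Hm : (1 <= m)%nat) by lia.
  destruct (Hpmf m Hm) as [H0 [H1 [H2 H3]]].
  assert (E : ff m - ff r = sum_f_R0 (fun j => p m j * (ff j - ff r)) m).
  { rewrite (ff_rec m) at 1 by auto.
    rewrite (sum_ext (fun j => p m j * (ff j - ff r)) (fun j => p m j * ff j + (- ff r) * p m j)) by (intros; ring).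
    rewrite sum_plus, sum_scal, H3. ring. }
  rewrite E. eapply Rle_trans; [apply sum_abs|].
  rewrite <- (Rmult_1_r G), <- H3, <- sum_scal. unfold dv, dev_prob. rewrite <- sum_plus.
  apply sum_le. intros j Hj.
  rewrite Rabs_mult, (Rabs_pos_eq _ (H0 j)).
  pose proof (H0 j). pose proof (ff_bounds j). pose proof (ff_bounds r).
  assert (Rabs (ff j - ff r) <= 1) by (apply Rabs_le; lra).
  assert (0 <= Rabs (ff j - ff r)) by apply Rabs_pos.
  destruct (Rlt_dec _ _) as [Hb|Hb].
  - nra.
  - assert (Rabs (ff j - ff r) <= G) by (apply Hgood; auto; lra). nra.
Qed.


End LE.

Lemma delta_small (delta : nat -> R) C1 e N1 : 0 < e ->
  (forall n, (N1 <= n)%nat -> Rabs (delta n) <= C1 * Rpower (ln (INR n)) (-1 - e)) ->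
  forall eta, 0 < eta -> exists N, forall n, (N <= n)%nat -> Rabs (delta n) <= eta.
Proof.
  intros He Hd eta Heta.
  destruct (rp_small (1 + e) (eta / (Rabs C1 + 1)) ltac:(lra)
              ltac:(apply Rdiv_lt_0_compat; [lra| pose proof (Rabs_pos C1); lra])) as [X [HX HXs]].
  destruct (nat_above (exp X)) as [N HN].
  exists (max N (max N1 1)). intros n Hn.
  assert (Hx : exp X <= INR n) by (apply HN; lia).
  assert (Hl : X <= ln (INR n)) by (rewrite <- (ln_exp X); apply ln_le_mono; [apply exp_pos| auto]).
  specialize (HXs _ Hl). replace (- (1 + e)) with (-1 - e) in HXs by ring.
  eapply Rle_trans; [apply Hd; lia|].
  pose proof (rp_pos (ln (INR n)) (-1 - e)).
  apply Rle_trans with (Rabs C1 * Rpower (ln (INR n)) (-1 - e)).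
  - apply Rmult_le_compat_r; [lra| apply RRle_abs].
  - apply Rle_trans with (Rabs C1 * (eta / (Rabs C1 + 1))).
    + apply Rmult_le_compat_l; [apply Rabs_pos| auto].
    + pose proof (Rabs_pos C1).
      replace (Rabs C1 * (eta / (Rabs C1 + 1))) with (eta * (Rabs C1 / (Rabs C1 + 1))) by (field; lra).
      assert (Rabs C1 / (Rabs C1 + 1) <= 1).
      { apply Rmult_le_reg_r with (Rabs C1 + 1); [lra|]. unfold Rdiv. rewrite Rmult_assoc, Rinv_l; lra. }
      nra.
Qed.

Lemma dv_bound (dvf : nat -> R) C3 e N3 : 0 < e ->
  (forall n, (N3 <= n)%nat -> dvf n <= C3 * Rpower (INR n) (-2 - e)) ->
  forall n, (max N3 1 <= n)%nat ->
  INR n * INR (S n) * (dvf n + dvf (S n)) <= 3 * Rabs C3 * Rpower (INR n) (- e).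
Proof.
  intros He Hd n Hn.
  assert (Hn1 : 1 <= INR n) by (apply (le_INR 1); lia).
  rewrite S_INR.
  pose proof (Hd n ltac:(lia)) as H1. pose proof (Hd (S n) ltac:(lia)) as H2.
  rewrite S_INR in H2. rewrite rp_m2e in H1, H2 by lra.
  pose proof (rp_dec (INR n) (INR n + 1) e ltac:(lra) ltac:(lra) ltac:(lra)) as Hdec.
  set (r := Rpower (INR n) (- e)) in *. set (r' := Rpower (INR n + 1) (- e)) in *.
  assert (Hr' : 0 < r') by apply rp_pos. assert (Hr : 0 < r) by apply rp_pos.
  assert (H1' : dvf n <= Rabs C3 * r / (INR n * INR n)).
  { eapply Rle_trans; [exact H1|]. unfold Rdiv. rewrite !Rmult_assoc.
    apply Rmult_le_compat_r; [| apply RRle_abs]. apply Rmult_le_pos; [lra|].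
    left; apply Rinv_0_lt_compat; nra. }
  assert (H2' : dvf (S n) <= Rabs C3 * r / ((INR n + 1) * (INR n + 1))).
  { eapply Rle_trans; [exact H2|].
    assert (Hq : 0 < / ((INR n + 1) * (INR n + 1))) by (apply Rinv_0_lt_compat; nra).
    apply Rle_trans with (Rabs C3 * (r' / ((INR n + 1) * (INR n + 1)))).
    - apply Rmult_le_compat_r; [unfold Rdiv; nra| apply RRle_abs].
    - unfold Rdiv. rewrite Rmult_assoc. apply Rmult_le_compat_l; [apply Rabs_pos| nra]. }
  pose proof (Rabs_pos C3) as Hc.
  assert (E1 : INR n * (INR n + 1) * (Rabs C3 * r / (INR n * INR n)) = Rabs C3 * r * (1 + / INR n))
    by (field; lra).
  assert (E2 : INR n * (INR n + 1) * (Rabs C3 * r / ((INR n + 1) * (INR n + 1))) = Rabs C3 * r * (INR n / (INR n + 1)))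
    by (field; lra).
  assert (Hi1 : / INR n <= 1) by (rewrite <- Rinv_1; apply Rinv_le_contravar; lra).
  assert (Hi2 : INR n / (INR n + 1) <= 1).
  { apply Rmult_le_reg_r with (INR n + 1); [lra|]. unfold Rdiv. rewrite Rmult_assoc, Rinv_l; lra. }
  assert (Hp : 0 <= INR n * (INR n + 1)) by nra.
  assert (INR n * (INR n + 1) * (dvf n + dvf (S n)) <=
          INR n * (INR n + 1) * (Rabs C3 * r / (INR n * INR n)) +
          INR n * (INR n + 1) * (Rabs C3 * r / ((INR n + 1) * (INR n + 1)))).
  { rewrite <- Rmult_plus_distr_l. apply Rmult_le_compat_l; lra. }
  rewrite E1, E2 in H.
  assert (0 <= Rabs C3 * r) by nra.
  assert (Rabs C3 * r * (1 + / INR n) <= Rabs C3 * r * 2) by (apply Rmult_le_compat_l; lra).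
  assert (Rabs C3 * r * (INR n / (INR n + 1)) <= Rabs C3 * r * 1) by (apply Rmult_le_compat_l; lra).
  lra.
Qed.

Lemma lip_chain (f : nat -> R) L n0 : 0 <= L -> (1 <= n0)%nat ->
  (forall n, (n0 <= n)%nat -> Rabs (f (S n) - f n) <= L / INR n) ->
  forall u v, (n0 <= u)%nat -> (u <= v)%nat -> Rabs (f v - f u) <= L * (INR v - INR u) / INR u.
Proof.
  intros HL Hn0 HD u v Hu Huv.
  assert (Hu0 : 0 < INR u) by (apply lt_0_INR; lia).
  induction Huv.
  - rewrite Rminus_diag, Rabs_R0. replace (L * (INR u - INR u) / INR u) with 0 by (field; lra). lra.
  - replace (f (S m) - f u) with ((f (S m) - f m) + (f m - f u)) by ring.
    eapply Rle_trans; [apply Rabs_triang|].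
    assert (Hm : 0 < INR m) by (apply lt_0_INR; lia).
    assert (H1 := HD m ltac:(lia)).
    assert (L / INR m <= L / INR u).
    { unfold Rdiv. apply Rmult_le_compat_l; auto. apply Rinv_le_contravar; auto. apply le_INR; auto. }
    rewrite S_INR. replace (L * (INR m + 1 - INR u) / INR u) with (L * (INR m - INR u) / INR u + L / INR u) by (field; lra).
    lra.
Qed.

Lemma lip_sym (f : nat -> R) L n0 : 0 <= L -> (1 <= n0)%nat ->
  (forall n, (n0 <= n)%nat -> Rabs (f (S n) - f n) <= L / INR n) ->
  forall u v M, (n0 <= u)%nat -> (n0 <= v)%nat -> 0 < M -> M <= INR u -> M <= INR v ->
  Rabs (f u - f v) <= L * Rabs (INR u - INR v) / M.
Proof.
  intros HL Hn0 HD u v M Hu Hv HM HMu HMv.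
  destruct (Nat.le_ge_cases u v) as [H|H].
  - rewrite Rabs_minus_sym. rewrite (Rabs_minus_sym (INR u)).
    eapply Rle_trans; [apply (lip_chain f L n0 HL Hn0 HD u v Hu H)|].
    assert (INR u <= INR v) by (apply le_INR; auto).
    rewrite Rabs_pos_eq by lra. unfold Rdiv. apply Rmult_le_compat_l; [nra|].
    apply Rinv_le_contravar; auto.
  - eapply Rle_trans; [apply (lip_chain f L n0 HL Hn0 HD v u Hv H)|].
    assert (INR v <= INR u) by (apply le_INR; auto).
    rewrite Rabs_pos_eq by lra. unfold Rdiv. apply Rmult_le_compat_l; [nra|].
    apply Rinv_le_contravar; auto.
Qed.

Section Main.
Variables (p : nat -> nat -> R) (alpha : R) (a i : nat) (pi : nat -> R) (delta : nat -> R)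
  (e C1 C2 C3 : R) (N1 N2 N3 : nat).
Hypothesis Hpmf : is_pmf_family p.
Hypothesis Hi : (1 <= i)%nat.
Hypothesis Hpi : forall n, (1 <= n)%nat -> Un_cv (fun K => visit_within p a i K n) (pi n).
Hypothesis Hmono : forall n k, (1 <= n)%nat -> (1 <= k)%nat -> cdf p n k >= cdf p (S n) k.
Hypothesis Ha : 0 < alpha < 1.
Hypothesis He : 0 < e.
Hypothesis HC1 : forall n, (N1 <= n)%nat -> Rabs (delta n) <= C1 * Rpower (ln (INR n)) (-1 - e).
Hypothesis HC2 : forall n, (N2 <= n)%nat -> Rabs (mean p (S n) - mean p n - alpha) <= C2 * Rabs (delta n).
Hypothesis HC3 : forall n, (N3 <= n)%nat -> dv p alpha delta n <= C3 * Rpower (INR n) (-2 - e).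

Let g := (1 + alpha) / 2.


Lemma D_bound : exists L n0, (1 <= n0)%nat /\ 2 <= INR n0 /\ 0 <= L /\
  forall n, (n0 <= n)%nat -> D pi n <= L / INR n.
Proof.
  set (eta := Rmin (alpha / 2) ((1 - alpha) / 4)).
  assert (Heta : 0 < eta) by (unfold eta; apply Rmin_pos; lra).
  assert (Heta1 : eta <= alpha / 2) by apply Rmin_l.
  assert (Heta2 : eta <= (1 - alpha) / 4) by apply Rmin_r.
  destruct (delta_small delta C1 e N1 He HC1 eta Heta) as [Ne HNe].
  set (cA := 2 * (Rabs C2 + 1) / alpha + 3 * Rabs C3).
  assert (HcA : 0 <= cA).
  { unfold cA. pose proof (Rabs_pos C2). pose proof (Rabs_pos C3).
    assert (0 <= 2 * (Rabs C2 + 1) / alpha) by (apply Rmult_le_pos; [lra| left; apply Rinv_0_lt_compat; lra]).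
    lra. }
  assert (Hg : 0 < g < 1) by (unfold g; lra).
  destruct (potential g e C1 cA N1 delta Hg He HcA HC1) as [A [B [C [NP [HA [HB [HC HP]]]]]]].
  set (Phi0 := Phi A B C e).
  destruct (nat_above 2) as [N2r HN2r].
  set (n0 := max (max (max Ne N2) (max N3 1)) (max (max NP N2r) (S (max a i)))).
  assert (Hn0 : forall n, (n0 <= n)%nat ->
     Rabs (delta n) <= eta /\ Rabs (delta (S n)) <= eta /\ (N2 <= n)%nat /\ (max N3 1 <= n)%nat /\
     (NP <= n)%nat /\ 2 <= INR n /\ (a < n)%nat /\ n <> i /\ S n <> i /\ (1 <= n)%nat).
  { intros n Hn. unfold n0 in Hn.
    repeat split; try lia; try (apply HNe; lia); try (apply HN2r; lia). }
  destruct (nat_above (2 * INR n0 / alpha)) as [Nb HNb].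
  set (N1b := max Nb n0).
  set (K := INR N1b + 1).
  assert (HK : 1 <= K) by (unfold K; pose proof (pos_INR N1b); lra).
  assert (Hn02 : 2 <= INR n0) by (apply (Hn0 n0); lia).
  assert (HPhi0 : 0 <= Phi0 (INR n0)) by (apply Phi_nonneg; auto).
  assert (claim : forall N n, (n <= N)%nat -> (n0 <= n)%nat ->
            INR n * D pi n + 1 <= K * exp (Phi0 (INR n0) - Phi0 (INR n))).
  { induction N as [|N IH]; intros n HnN Hn0n.
    - exfalso. assert (1 <= n0)%nat by (apply (Hn0 n0); lia). lia.
    - destruct (Nat.le_gt_cases n N1b) as [Hsmall|Hbig].
      + assert (Hexp : 1 <= exp (Phi0 (INR n0) - Phi0 (INR n))).
        { assert (Phi0 (INR n) <= Phi0 (INR n0)) by (apply Phi_dec; auto; apply le_INR; auto).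
          pose proof (exp_ineq1_le (Phi0 (INR n0) - Phi0 (INR n))). lra. }
        assert (INR n * D pi n <= INR n) by (pose proof (D_le1 p a i pi Hpmf Hi Hpi n); pose proof (pos_INR n); nra).
        assert (INR n <= INR N1b) by (apply le_INR; auto).
        unfold K in *. assert (0 <= (INR N1b + 1) * (exp (Phi0 (INR n0) - Phi0 (INR n)) - 1)) by (apply Rmult_le_pos; lra). nra.
      + destruct (Hn0 n Hn0n) as [Hd1 [Hd2 [HN2n [HN3n [HNPn [Hn2 [Han [Hni [HSni Hn1]]]]]]]]].
        assert (HnNb : 2 * INR n0 / alpha <= INR n) by (apply HNb; unfold N1b in Hbig; lia).
        assert (Han0 : 2 * INR n0 <= alpha * INR n).
        { apply Rmult_le_compat_l with (r := alpha) in HnNb; [|lra].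
          replace (alpha * (2 * INR n0 / alpha)) with (2 * INR n0) in HnNb by (field; lra). lra. }
        set (x := Rabs (delta n)) in *.
        assert (Hx0 : 0 <= x) by apply Rabs_pos.
        set (R := K * exp (Phi0 (INR n0) - Phi0 (g * INR n))).
        assert (HgR : INR n0 <= g * INR n) by (unfold g; nra).
        assert (HR1 : 1 <= R).
        { unfold R. assert (Phi0 (g * INR n) <= Phi0 (INR n0)) by (apply Phi_dec; auto).
          pose proof (exp_ineq1_le (Phi0 (INR n0) - Phi0 (g * INR n))).
          assert (0 <= (K - 1) * (exp (Phi0 (INR n0) - Phi0 (g * INR n)) - 1)) by (apply Rmult_le_pos; lra).
          nra. }
        assert (Hax : alpha / 2 <= alpha - x) by lra.
        assert (Hnpos : 0 < INR n * (alpha - x)) by (apply Rmult_lt_0_compat; lra).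
        set (G := (R - 1) / (INR n * (alpha - x))).
        assert (HG0 : 0 <= G) by (unfold G; apply Rmult_le_pos; [lra| left; apply Rinv_0_lt_compat; lra]).
        assert (HsA : D pi n <= (mean p (S n) - mean p n) * G + INR (S n) * (dv p alpha delta n + dv p alpha delta (S n))).
        { apply (stepA p alpha a i pi Hpmf Hi Hpi Hmono delta n G Hn1 Han Hni HSni HG0).
          intros j Hj Hlow Hhigh.
          assert (Hdn : delta n * INR n <= x * INR n) by (apply Rmult_le_compat_r; [apply pos_INR| apply RRle_abs]).
          assert (Hjlo : INR n * (alpha - x) <= INR j) by nra.
          assert (Hdsn : delta (S n) * INR (S n) <= eta * INR (S n)).
          { apply Rmult_le_compat_r; [apply pos_INR|]. eapply Rle_trans; [apply RRle_abs| auto]. }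
          rewrite !S_INR in Hhigh, Hdsn.
          assert (eta * INR n <= (1 - alpha) / 4 * INR n) by (apply Rmult_le_compat_r; [apply pos_INR| auto]).
          rewrite !S_INR in Hhigh.
          assert (alpha * INR n <= INR n) by (pose proof (pos_INR n); nra).
          assert (Hjhi : INR j <= g * INR n) by (unfold g; lra).
          assert (INR n * (alpha / 2) <= INR n * (alpha - x)) by (apply Rmult_le_compat_l; [apply pos_INR| auto]).
          assert (Hjn0 : (n0 <= j)%nat) by (apply INR_le; lra).
          assert (Hjn : (j < n)%nat) by (apply INR_lt; unfold g in Hjhi; nra).
          assert (IHj := IH j ltac:(lia) Hjn0).
          assert (Hj2 : 2 <= INR j) by (apply (Hn0 j); auto).
          assert (Phi0 (g * INR n) <= Phi0 (INR j)) by (apply Phi_dec; auto).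
          assert (exp (Phi0 (INR n0) - Phi0 (INR j)) <= exp (Phi0 (INR n0) - Phi0 (g * INR n))) by (apply exp_le_mono; lra).
          assert (HDj : INR j * D pi j <= R - 1) by (unfold R; nra).
          assert (HD0 : 0 <= D pi j) by (unfold D; apply Rabs_pos).
          unfold G. apply Rmult_le_reg_r with (INR n * (alpha - x)); [lra|].
          unfold Rdiv. rewrite Rmult_assoc, Rinv_l by lra. nra. }
        assert (Hmd : mean p (S n) - mean p n <= alpha + Rabs C2 * x).
        { specialize (HC2 n HN2n). pose proof (Rle_abs (mean p (S n) - mean p n - alpha)). fold x in HC2.
          assert (C2 * x <= Rabs C2 * x) by (apply Rmult_le_compat_r; [auto| apply RRle_abs]). lra. }
        pose proof (dv_bound (dv p alpha delta) C3 e N3 He HC3 n HN3n) as HE.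
        set (r := Rpower (INR n) (- e)) in *.
        set (E := INR n * INR (S n) * (dv p alpha delta n + dv p alpha delta (S n))) in *.
        set (c := 2 * (Rabs C2 + 1) / alpha).
        assert (Hc0 : 0 <= c) by (unfold c; apply Rmult_le_pos; [pose proof (Rabs_pos C2); lra| left; apply Rinv_0_lt_compat; lra]).
        assert (Hq : INR n * ((alpha + Rabs C2 * x) * G) <= (R - 1) * (1 + c * x)).
        { unfold G. replace (INR n * ((alpha + Rabs C2 * x) * ((R - 1) / (INR n * (alpha - x)))))
             with ((R - 1) * ((alpha + Rabs C2 * x) / (alpha - x))) by (field; lra).
          apply Rmult_le_compat_l; [lra|].
          apply Rmult_le_reg_r with (alpha - x); [lra|].
          unfold Rdiv. rewrite Rmult_assoc, Rinv_l by lra. rewrite Rmult_1_r.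
          unfold c. 
          replace ((1 + 2 * (Rabs C2 + 1) / alpha * x) * (alpha - x)) with
             (alpha + Rabs C2 * x + (Rabs C2 + 1) * x * (1 - 2 * x / alpha)) by (field; lra).
          assert (0 <= 1 - 2 * x / alpha).
          { assert (2 * x / alpha <= 1); [|lra].
            apply Rmult_le_reg_r with alpha; [lra|]. unfold Rdiv. rewrite Rmult_assoc, Rinv_l; lra. }
          pose proof (Rabs_pos C2). assert (0 <= (Rabs C2 + 1) * x * (1 - 2 * x / alpha)) by (apply Rmult_le_pos; nra).
          lra. }
        assert (HE0 : 0 <= E).
        { unfold E. apply Rmult_le_pos; [apply Rmult_le_pos; apply pos_INR|].
          pose proof (dv_nonneg p alpha Hpmf delta n Hn1). pose proof (dv_nonneg p alpha Hpmf delta (S n) ltac:(lia)). lra. }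
        assert (Hstep : INR n * D pi n + 1 <= R * (1 + (c * x + E))).
        { assert (INR n * D pi n <= INR n * ((mean p (S n) - mean p n) * G) + E).
          { unfold E. rewrite S_INR in HsA |- *. 
            replace (INR n * ((mean p (S n) - mean p n) * G) + INR n * (INR n + 1) * (dv p alpha delta n + dv p alpha delta (S n)))
              with (INR n * ((mean p (S n) - mean p n) * G + (INR n + 1) * (dv p alpha delta n + dv p alpha delta (S n)))) by ring.
            apply Rmult_le_compat_l; [apply pos_INR| auto]. }
          assert (INR n * ((mean p (S n) - mean p n) * G) <= INR n * ((alpha + Rabs C2 * x) * G)).
          { apply Rmult_le_compat_l; [apply pos_INR|]. apply Rmult_le_compat_r; auto. }
          assert (0 <= c * x) by nra.
          nra. }
        assert (Hpot := HP n HNPn). fold x r in Hpot. fold Phi0 in Hpot.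
        assert (Hcx : c * x + E <= cA * (x + r + / INR n)).
        { pose proof (rp_pos (INR n) (- e)). fold r in H.
          assert (0 < / INR n) by (apply Rinv_0_lt_compat; lra).
          unfold cA. fold c. pose proof (Rabs_pos C3). nra. }
        assert (Hex : 1 + (c * x + E) <= exp (Phi0 (g * INR n) - Phi0 (INR n))).
        { eapply Rle_trans; [| apply exp_ineq1_le]. lra. }
        eapply Rle_trans; [exact Hstep|].
        unfold R. rewrite Rmult_assoc. apply Rmult_le_compat_l; [lra|].
        replace (Phi0 (INR n0) - Phi0 (INR n)) with ((Phi0 (INR n0) - Phi0 (g * INR n)) + (Phi0 (g * INR n) - Phi0 (INR n))) by ring.
        rewrite exp_plus. apply Rmult_le_compat_l; [left; apply exp_pos| auto].
  }
  exists (K * exp (Phi0 (INR n0))), n0.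
  split; [apply (Hn0 n0); lia|]. split; [auto|]. split; [pose proof (exp_pos (Phi0 (INR n0))); nra|].
  intros n Hn. specialize (claim n n (le_n _) Hn).
  assert (Hn2 : 2 <= INR n) by (apply (Hn0 n); auto).
  assert (exp (Phi0 (INR n0) - Phi0 (INR n)) <= exp (Phi0 (INR n0))).
  { apply exp_le_mono. assert (0 <= Phi0 (INR n)) by (apply Phi_nonneg; auto). lra. }
  apply Rmult_le_reg_l with (INR n); [lra|].
  replace (INR n * (K * exp (Phi0 (INR n0)) / INR n)) with (K * exp (Phi0 (INR n0))) by (field; lra).
  nra.
Qed.

Lemma stepB_bound L n0 : 0 <= L -> (1 <= n0)%nat ->
  (forall n, (n0 <= n)%nat -> D pi n <= L / INR n) ->
  exists Ms : nat, forall m r, (Ms <= m)%nat -> Rabs (INR r - alpha * INR m) <= 1 ->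
    Rabs (ff pi m - ff pi r) <= (4 * L / alpha + Rabs C3) *
        (Rabs (delta m) + Rpower (INR m) (- e) + / INR m).
Proof.
  intros HL Hn0 HD.
  destruct (delta_small delta C1 e N1 He HC1 (alpha / 4) ltac:(lra)) as [Ne HNe].
  destruct (nat_above (4 * (INR n0 + 1) / alpha)) as [Nm HNm].
  exists (max (max Ne Nm) (max (max N3 1) (S (max a i)))).
  intros m r Hm Hr.
  assert (Hx : Rabs (delta m) <= alpha / 4) by (apply HNe; lia).
  assert (HmN : 4 * (INR n0 + 1) / alpha <= INR m) by (apply HNm; lia).
  assert (Ham : INR n0 + 1 <= alpha * INR m / 4).
  { apply Rmult_le_compat_l with (r := alpha / 4) in HmN; [|lra].
    replace (alpha / 4 * (4 * (INR n0 + 1) / alpha)) with (INR n0 + 1) in HmN by (field; lra). lra. }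
  assert (Hn01 : 1 <= INR n0) by (apply (le_INR 1); auto).
  assert (Hm1 : 1 <= INR m) by (apply Rle_trans with (4 * (INR n0 + 1) / alpha); auto;
     apply Rle_trans with (4 * (INR n0 + 1)); [lra|]; unfold Rdiv;
     rewrite <- (Rmult_1_r (4 * (INR n0 + 1))) at 1; apply Rmult_le_compat_l; [lra|];
     rewrite <- Rinv_1; apply Rinv_le_contravar; lra).
  set (x := Rabs (delta m)) in *.
  set (M := alpha * INR m / 4).
  assert (HM0 : 0 < M) by (unfold M; lra).
  set (G := L * (x * INR m + 1) / M).
  assert (Hx0 : 0 <= x) by apply Rabs_pos.
  assert (HG0 : 0 <= G) by (unfold G; apply Rmult_le_pos; [apply Rmult_le_pos; [auto| pose proof (pos_INR m); nra] | left; apply Rinv_0_lt_compat; auto]).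
  assert (HxM : x * INR m <= alpha / 4 * INR m) by (apply Rmult_le_compat_r; [apply pos_INR| auto]).
  assert (HrM : M <= INR r).
  { unfold M. apply Rabs_le_between in Hr. lra. }
  assert (Hlip := lip_sym (ff pi) L n0 HL Hn0 HD).
  assert (HB := stepB p alpha a i pi Hpmf Hi Hpi delta m r G ltac:(lia) ltac:(lia) HG0).
  assert (Hstep : Rabs (ff pi m - ff pi r) <= G + dv p alpha delta m).
  { apply HB. intros j Hj Hjg.
    assert (Hd : delta m * INR m <= x * INR m) by (apply Rmult_le_compat_r; [apply pos_INR| apply RRle_abs]).
    apply Rabs_le_between in Hjg. apply Rabs_le_between in Hr.
    assert (HjM : M <= INR j) by (unfold M; lra).
    eapply Rle_trans; [apply (Hlip j r M); auto|].
    - apply INR_le. lra.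
    - apply INR_le. lra.
    - unfold G, Rdiv. apply Rmult_le_compat_r; [left; apply Rinv_0_lt_compat; auto|].
      apply Rmult_le_compat_l; auto. apply Rabs_le. lra. }
  assert (Hdv : dv p alpha delta m <= Rabs C3 * Rpower (INR m) (- e)).
  { eapply Rle_trans; [apply HC3; lia|]. rewrite rp_m2e by lra.
    pose proof (rp_pos (INR m) (- e)).
    apply Rle_trans with (Rabs C3 * (Rpower (INR m) (- e) / (INR m * INR m))).
    - apply Rmult_le_compat_r; [unfold Rdiv; apply Rmult_le_pos; [lra| left; apply Rinv_0_lt_compat; nra]| apply RRle_abs].
    - apply Rmult_le_compat_l; [apply Rabs_pos|].
      unfold Rdiv. rewrite <- (Rmult_1_r (Rpower (INR m) (- e))) at 2. apply Rmult_le_compat_l; [lra|].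
      rewrite <- Rinv_1. apply Rinv_le_contravar; nra. }
  assert (HGe : G = 4 * L / alpha * (x + / INR m)) by (unfold G, M; field; lra).
  pose proof (rp_pos (INR m) (- e)). pose proof (Rabs_pos C3).
  assert (0 <= 4 * L / alpha) by (unfold Rdiv; apply Rmult_le_pos; [lra| left; apply Rinv_0_lt_compat; lra]).
  assert (0 < / INR m) by (apply Rinv_0_lt_compat; lra).
  assert (0 <= x) by apply Rabs_pos.
  rewrite HGe in Hstep. nra.
Qed.
End Main.

Lemma my_le_eps a b : (forall eps, 0 < eps -> a <= b + eps) -> a <= b.
Proof.
  intros H. destruct (Rle_dec a b) as [Hl|Hl]; auto.
  specialize (H ((a - b) / 2) ltac:(lra)). lra.
Qed.

Lemma pow_big b M : 1 < b -> exists k, forall k', (k <= k')%nat -> M <= b ^ k'.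
Proof.
  intros Hb.
  assert (Hber : forall k, 1 + INR k * (b - 1) <= b ^ k).
  { induction k; [simpl; lra|]. rewrite S_INR. simpl pow.
    assert (0 <= INR k) by apply pos_INR.
    assert (0 <= b * (b ^ k - (1 + INR k * (b - 1)))) by (apply Rmult_le_pos; lra).
    assert (0 <= INR k * ((b - 1) * (b - 1))) by (apply Rmult_le_pos; nra). nra. }
  destruct (nat_above (M / (b - 1))) as [k Hk]. exists k. intros k' Hk'.
  specialize (Hk k' Hk'). specialize (Hber k').
  assert (M <= INR k' * (b - 1)).
  { apply Rmult_le_compat_r with (r := b - 1) in Hk; [|lra].
    replace (M / (b - 1) * (b - 1)) with M in Hk by (field; lra). lra. }
  lra.
Qed.

Section Psi.
Variables (f : nat -> R) (alpha A B C e L : R) (n0 Ms : nat).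
Hypotheses (Ha : 0 < alpha < 1) (HA : 0 <= A) (HB : 0 <= B) (HC : 0 <= C) (He : 0 < e)
  (HL : 0 <= L) (Hn0 : (1 <= n0)%nat).
Let Psi := Phi A B C e.
Let g := (1 + alpha) / 2.
Hypothesis Hlip : forall u v M, (n0 <= u)%nat -> (n0 <= v)%nat -> 0 < M -> M <= INR u -> M <= INR v ->
  Rabs (f u - f v) <= L * Rabs (INR u - INR v) / M.
Hypothesis Hstep : forall m r, (Ms <= m)%nat -> Rabs (INR r - alpha * INR m) <= 1 ->
  Rabs (f m - f r) <= Psi (g * INR m) - Psi (INR m).

Let b := / alpha.
Lemma b_gt1 : 1 < b.
Proof. unfold b. rewrite <- Rinv_1. apply Rinv_lt_contravar; lra. Qed.

Lemma b_pos : 0 < b.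
Proof. pose proof b_gt1. lra. Qed.

Definition nk (t : R) (k : nat) : nat := fl (t * b ^ k).
Definition gk (t : R) (k : nat) : R := f (nk t k).

Lemma bpow_pos k : 0 < b ^ k.
Proof. apply pow_lt. apply b_pos. Qed.

Lemma nk_spec t k : 0 < t -> INR (nk t k) <= t * b ^ k < INR (nk t k) + 1.
Proof. intros Ht. apply fl_spec. pose proof (bpow_pos k). nra. Qed.

Lemma nk_mono t k k' : 0 < t -> (k <= k')%nat -> (nk t k <= nk t k')%nat.
Proof.
  intros Ht Hk. unfold nk. apply fl_mono.
  - pose proof (bpow_pos k). nra.
  - apply Rmult_le_compat_l; [lra|]. apply Rle_pow; auto. pose proof b_gt1. lra.
Qed.

Lemma nk_rel t k : 0 < t -> Rabs (INR (nk t k) - alpha * INR (nk t (S k))) <= 1.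
Proof.
  intros Ht. destruct (nk_spec t k Ht) as [H1 H2]. destruct (nk_spec t (S k) Ht) as [H3 H4].
  assert (E : alpha * (t * b ^ S k) = t * b ^ k).
  { simpl. unfold b. field. lra. }
  assert (alpha * INR (nk t (S k)) <= t * b ^ k) by (rewrite <- E; apply Rmult_le_compat_l; lra).
  assert (t * b ^ k < alpha * INR (nk t (S k)) + alpha) by (rewrite <- E; nra).
  apply Rabs_le. lra.
Qed.

Definition Xs : R := INR Ms + 2 / g + (g / alpha) / (g / alpha - 1) + 2.

Lemma g_facts : 0 < g < 1 /\ 1 < g / alpha.
Proof.
  unfold g. split; [lra|]. apply Rmult_lt_reg_r with alpha; [lra|].
  unfold Rdiv. rewrite Rmult_assoc, Rinv_l by lra. lra.
Qed.

Lemma Xs_facts x : Xs <= x -> INR Ms <= x /\ 2 <= x /\ 2 <= g * x /\ g / alpha <= (g / alpha - 1) * x.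
Proof.
  intros Hx. destruct g_facts as [Hg Hga].
  assert (H1 : 0 < 2 / g) by (apply Rdiv_lt_0_compat; lra).
  assert (H2 : 0 < (g / alpha) / (g / alpha - 1)) by (apply Rdiv_lt_0_compat; lra).
  pose proof (pos_INR Ms). unfold Xs in Hx.
  repeat split; try lra.
  - assert (2 / g <= x) by lra.
    apply Rmult_le_compat_l with (r := g) in H0; [|lra].
    replace (g * (2 / g)) with 2 in H0 by (field; lra). lra.
  - assert ((g / alpha) / (g / alpha - 1) <= x) by lra.
    apply Rmult_le_compat_l with (r := g / alpha - 1) in H0; [|lra].
    replace ((g / alpha - 1) * ((g / alpha) / (g / alpha - 1))) with (g / alpha) in H0 by (field; repeat split; unfold g in *; lra). lra.
Qed.

Lemma nk_next t k : 0 < t -> Xs <= INR (nk t k) -> INR (nk t k) <= g * INR (nk t (S k)).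
Proof.
  intros Ht Hx. destruct (Xs_facts _ Hx) as [_ [_ [_ H]]]. pose proof (nk_rel t k Ht) as Hr.
  apply Rabs_le_between in Hr. destruct g_facts as [Hg Hga].
  assert (INR (nk t k) - 1 <= alpha * INR (nk t (S k))) by lra.
  assert (g / alpha * (INR (nk t k) - 1) <= g / alpha * (alpha * INR (nk t (S k)))) by (apply Rmult_le_compat_l; lra).
  replace (g / alpha * (alpha * INR (nk t (S k)))) with (g * INR (nk t (S k))) in H1 by (field; lra).
  lra.
Qed.

Lemma chain t k : 0 < t -> Xs <= INR (nk t (S k)) -> forall m, (k <= m)%nat ->
  Rabs (gk t m - gk t k) <= Psi (g * INR (nk t (S k))) - Psi (g * INR (nk t (S m))).
Proof.
  intros Ht Hx m Hm. induction Hm.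
  - unfold Rminus at 1. rewrite Rplus_opp_r, Rabs_R0. lra.
  - assert (Hmono : (nk t (S k) <= nk t (S m))%nat) by (apply nk_mono; auto; lia).
    assert (Hx' : Xs <= INR (nk t (S m))) by (eapply Rle_trans; [exact Hx| apply le_INR; auto]).
    destruct (Xs_facts _ Hx') as [HMs [H2 [Hg2 _]]].
    assert (Hs : Rabs (gk t (S m) - gk t m) <= Psi (g * INR (nk t (S m))) - Psi (INR (nk t (S m)))).
    { unfold gk. apply Hstep; [apply INR_le; auto| apply nk_rel; auto]. }
    assert (Hn : INR (nk t (S m)) <= g * INR (nk t (S (S m)))) by (apply nk_next; auto).
    assert (Psi (g * INR (nk t (S (S m)))) <= Psi (INR (nk t (S m)))) by (apply Phi_dec; auto).
    replace (gk t (S m) - gk t k) with ((gk t (S m) - gk t m) + (gk t m - gk t k)) by ring.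
    eapply Rle_trans; [apply Rabs_triang|]. lra.
Qed.

Lemma tail t k : 0 < t -> Xs <= INR (nk t (S k)) -> forall m, (k <= m)%nat ->
  Rabs (gk t m - gk t k) <= Psi (g * INR (nk t (S k))).
Proof.
  intros Ht Hx m Hm. eapply Rle_trans; [apply chain; eauto|].
  assert (Hmono : (nk t (S k) <= nk t (S m))%nat) by (apply nk_mono; auto; lia).
  assert (Hx' : Xs <= INR (nk t (S m))) by (eapply Rle_trans; [exact Hx| apply le_INR; auto]).
  destruct (Xs_facts _ Hx') as [_ [_ [Hg2 _]]].
  pose proof (Phi_nonneg A B C e HA HB HC _ Hg2). unfold Psi. lra.
Qed.

Lemma nk_big t X : 0 < t -> exists k, forall k', (k <= k')%nat -> X <= INR (nk t k').
Proof.
  intros Ht. destruct (pow_big b ((X + 1) / t) b_gt1) as [k Hk]. exists k. intros k' Hk'.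
  specialize (Hk k' Hk'). destruct (nk_spec t k' Ht).
  apply Rmult_le_compat_l with (r := t) in Hk; [|lra].
  replace (t * ((X + 1) / t)) with (X + 1) in Hk by (field; lra). lra.
Qed.

Lemma gk_cauchy t : 0 < t -> Cauchy_crit (gk t).
Proof.
  intros Ht eps Heps.
  destruct (Phi_small A B C e HA HB HC He (eps / 4) ltac:(lra)) as [Xe [HXe2 HXe]].
  destruct g_facts as [Hg _].
  destruct (nk_big t (Xs + Xe / g) Ht) as [k Hk].
  exists k. intros m m' Hm Hm'.
  assert (Hx : Xs + Xe / g <= INR (nk t (S k))) by (apply Hk; lia).
  assert (HXs : Xs <= INR (nk t (S k))).
  { assert (0 <= Xe / g) by (apply Rmult_le_pos; [lra| left; apply Rinv_0_lt_compat; lra]). lra. }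
  assert (HgX : Xe <= g * INR (nk t (S k))).
  { assert (Xe / g <= INR (nk t (S k))).
    { pose proof (Xs_facts _ (Rle_refl Xs)). pose proof (pos_INR Ms). unfold Xs in *.
      assert (0 <= 2 / g) by (apply Rmult_le_pos; [lra| left; apply Rinv_0_lt_compat; lra]).
      destruct g_facts as [_ Hga].
      assert (0 <= (g / alpha) / (g / alpha - 1)) by (apply Rmult_le_pos; [apply Rmult_le_pos; [lra| left; apply Rinv_0_lt_compat; lra] | left; apply Rinv_0_lt_compat; lra]).
      lra. }
    apply Rmult_le_compat_l with (r := g) in H; [|lra].
    replace (g * (Xe / g)) with Xe in H by (field; lra). lra. }
  specialize (HXe _ HgX).
  pose proof (tail t k Ht HXs m Hm). pose proof (tail t k Ht HXs m' Hm').
  unfold Rdist. replace (gk t m - gk t m') with ((gk t m - gk t k) - (gk t m' - gk t k)) by ring.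
  eapply Rle_lt_trans; [apply Rabs_triang|]. rewrite Rabs_Ropp. unfold Psi in *. lra.
Qed.

Definition psi (t : R) : R := epsilon (inhabits 0) (fun l => Un_cv (gk t) l).

Lemma psi_cv t : 0 < t -> Un_cv (gk t) (psi t).
Proof.
  intros Ht. unfold psi. apply epsilon_spec.
  destruct (R_complete (gk t) (gk_cauchy t Ht)) as [l Hl]. exists l. exact Hl.
Qed.

Lemma psi_close t k : 0 < t -> Xs <= INR (nk t (S k)) ->
  Rabs (psi t - gk t k) <= Psi (g * INR (nk t (S k))).
Proof.
  intros Ht Hx. pose proof (tail t k Ht Hx) as Ht2. apply Rabs_le.
  split.
  - assert (gk t k - Psi (g * INR (nk t (S k))) <= psi t); [|lra].
    apply (lim_ge_ev (gk t) (psi t) _ k (psi_cv t Ht)). intros m Hm.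
    specialize (Ht2 m Hm). apply Rabs_le_between in Ht2. lra.
  - assert (psi t <= gk t k + Psi (g * INR (nk t (S k)))); [|lra].
    apply (lim_le_ev (gk t) (psi t) _ k (psi_cv t Ht)). intros m Hm.
    specialize (Ht2 m Hm). apply Rabs_le_between in Ht2. lra.
Qed.

Lemma psi_per t : 0 < t -> psi (alpha * t) = psi t.
Proof.
  intros Ht.
  assert (H1 := psi_cv (alpha * t) ltac:(nra)).
  assert (H2 : Un_cv (gk t) (psi (alpha * t))).
  { intros eps Heps. destruct (H1 eps Heps) as [N HN]. exists N. intros n Hn.
    specialize (HN (S n) ltac:(lia)).
    replace (gk (alpha * t) (S n)) with (gk t n) in HN; auto.
    unfold gk, nk. f_equal. f_equal. simpl. unfold b. field. lra. }
  eapply UL_sequence; [exact H2| apply psi_cv; auto].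
Qed.


Lemma Xe_facts Xe : 2 <= Xe -> forall z, Xs + Xe / g <= z -> Xs <= z /\ Xe <= g * z.
Proof.
  intros HXe z Hz. destruct g_facts as [Hg Hga].
  assert (Hxs : 0 <= Xs).
  { unfold Xs. pose proof (pos_INR Ms).
    assert (0 <= 2 / g) by (apply Rmult_le_pos; [lra| left; apply Rinv_0_lt_compat; lra]).
    assert (0 <= (g / alpha) / (g / alpha - 1)) by (apply Rmult_le_pos; [apply Rmult_le_pos; [lra| left; apply Rinv_0_lt_compat; lra] | left; apply Rinv_0_lt_compat; lra]).
    lra. }
  assert (H0 : 0 <= Xe / g) by (apply Rmult_le_pos; [lra| left; apply Rinv_0_lt_compat; lra]).
  split; [lra|].
  assert (Xe / g <= z) by lra.
  apply Rmult_le_compat_l with (r := g) in H; [|lra].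
  replace (g * (Xe / g)) with Xe in H by (field; lra). lra.
Qed.

Lemma psi_lip t : 0 < t -> forall x y, Rabs (x - t) < t / 2 -> Rabs (y - t) < t / 2 ->
  Rabs (psi x - psi y) <= 4 * L / t * Rabs (x - y).
Proof.
  intros Ht x y Hx Hy. apply my_le_eps. intros eps Heps.
  destruct (Phi_small A B C e HA HB HC He (eps / 3) ltac:(lra)) as [Xe [HXe2 HXe]].
  destruct g_facts as [Hg Hga].
  assert (HXs0 : 0 <= Xs + Xe / g).
  { destruct (Xe_facts Xe HXe2 (Xs + Xe / g) (Rle_refl _)). nra. }
  set (Z := (Xs + Xe / g + 1) * 2 / t + 4 * (INR n0 + 1) / t + 12 * L / (t * eps) + 1).
  destruct (pow_big b Z b_gt1) as [k Hk]. specialize (Hk k (le_n _)).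
  set (B0 := b ^ k) in *.
  assert (HB0 : 0 < B0) by apply bpow_pos.
  assert (Hz1 : 0 <= (Xs + Xe / g + 1) * 2 / t) by (apply Rmult_le_pos; [lra| left; apply Rinv_0_lt_compat; lra]).
  assert (Hz2 : 0 <= 4 * (INR n0 + 1) / t) by (apply Rmult_le_pos; [pose proof (pos_INR n0); lra| left; apply Rinv_0_lt_compat; lra]).
  assert (Hz3 : 0 <= 12 * L / (t * eps)) by (apply Rmult_le_pos; [lra| left; apply Rinv_0_lt_compat; nra]).
  assert (Ha1 : Xs + Xe / g + 1 <= t / 2 * B0).
  { assert ((Xs + Xe / g + 1) * 2 / t <= B0) by (unfold Z in Hk; lra).
    apply Rmult_le_compat_l with (r := t / 2) in H; [|lra].
    replace (t / 2 * ((Xs + Xe / g + 1) * 2 / t)) with (Xs + Xe / g + 1) in H by (field; lra). lra. }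
  assert (Ha2 : INR n0 + 1 <= t / 4 * B0).
  { assert (4 * (INR n0 + 1) / t <= B0) by (unfold Z in Hk; lra).
    apply Rmult_le_compat_l with (r := t / 4) in H; [|lra].
    replace (t / 4 * (4 * (INR n0 + 1) / t)) with (INR n0 + 1) in H by (field; lra). lra. }
  assert (Ha3 : 4 * L / (t * B0) <= eps / 3).
  { assert (12 * L / (t * eps) <= B0) by (unfold Z in Hk; lra).
    apply Rmult_le_reg_r with (t * B0); [nra|].
    unfold Rdiv at 1. rewrite Rmult_assoc, Rinv_l by nra.
    apply Rmult_le_compat_l with (r := t * eps / 3) in H; [|nra].
    replace (t * eps / 3 * (12 * L / (t * eps))) with (4 * L) in H by (field; lra). nra. }
  assert (Hn01 : 1 <= INR n0) by (apply (le_INR 1); auto).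
  set (M := t / 4 * B0).
  assert (facts : forall z, Rabs (z - t) < t / 2 ->
     (Rabs (psi z - gk z k) <= eps / 3) /\ (M <= INR (nk z k)) /\ (n0 <= nk z k)%nat /\ (z * B0 - 1 < INR (nk z k)) /\ (INR (nk z k) <= z * B0)).
  { intros z Hz. apply Rabs_def2 in Hz. assert (Hz0 : 0 < z) by lra.
    destruct (nk_spec z k Hz0) as [N1 N2]. fold B0 in N1, N2.
    destruct (nk_spec z (S k) Hz0) as [N3 N4].
    assert (Hbb : B0 <= b ^ S k) by (replace (b ^ S k) with (b * B0) by (unfold B0; simpl; ring); pose proof b_gt1; nra).
    assert (HzB : t / 2 * B0 <= z * b ^ S k) by (nra).
    assert (Hk1 : Xs + Xe / g <= INR (nk z (S k))) by lra.
    destruct (Xe_facts Xe HXe2 _ Hk1) as [Hk2 Hk3].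
    repeat split.
    - eapply Rle_trans; [apply psi_close; auto|]. apply HXe; auto.
    - unfold M. nra.
    - apply INR_le. unfold M in *. nra.
    - lra.
    - lra. }
  destruct (facts x Hx) as [Fx1 [Fx2 [Fx3 [Fx4 Fx5]]]].
  destruct (facts y Hy) as [Fy1 [Fy2 [Fy3 [Fy4 Fy5]]]].
  assert (HM : 0 < M) by (unfold M; nra).
  assert (Hl := Hlip (nk x k) (nk y k) M Fx3 Fy3 HM Fx2 Fy2).
  assert (Hd : Rabs (INR (nk x k) - INR (nk y k)) <= Rabs (x - y) * B0 + 1).
  { rewrite <- (Rabs_pos_eq B0) by lra. rewrite <- Rabs_mult. apply Rabs_le.
    pose proof (Rle_abs ((x - y) * B0)). pose proof (Rle_abs (- ((x - y) * B0))). rewrite Rabs_Ropp in H0. lra. }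
  assert (Hg' : Rabs (gk x k - gk y k) <= 4 * L / t * Rabs (x - y) + eps / 3).
  { unfold gk. eapply Rle_trans; [exact Hl|].
    apply Rle_trans with (L * (Rabs (x - y) * B0 + 1) / M).
    - unfold Rdiv. apply Rmult_le_compat_r; [left; apply Rinv_0_lt_compat; auto|]. apply Rmult_le_compat_l; auto.
    - replace (L * (Rabs (x - y) * B0 + 1) / M) with (4 * L / t * Rabs (x - y) + 4 * L / (t * B0)) by (unfold M; field; lra).
      lra. }
  replace (psi x - psi y) with ((psi x - gk x k) + (gk x k - gk y k) - (psi y - gk y k)) by ring.
  eapply Rle_trans; [apply Rabs_triang|]. rewrite Rabs_Ropp.
  eapply Rle_trans; [apply Rplus_le_compat_r; apply Rabs_triang|]. lra.
Qed.

Lemma psi_cont t : 0 < t -> continuity_pt psi t.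
Proof.
  intros Ht eps Heps.
  set (K := 4 * L / t).
  assert (HK : 0 <= K) by (unfold K; apply Rmult_le_pos; [lra| left; apply Rinv_0_lt_compat; lra]).
  exists (Rmin (t / 2) (eps / (K + 1))). split.
  - apply Rmin_pos; [lra| apply Rdiv_lt_0_compat; lra].
  - intros x [_ Hx]. simpl in Hx |- *. unfold R_dist in *.
    assert (Hx1 : Rabs (x - t) < t / 2) by (eapply Rlt_le_trans; [exact Hx| apply Rmin_l]).
    assert (Hx2 : Rabs (x - t) < eps / (K + 1)) by (eapply Rlt_le_trans; [exact Hx| apply Rmin_r]).
    assert (Ht0 : Rabs (t - t) < t / 2) by (rewrite Rminus_diag, Rabs_R0; lra).
    eapply Rle_lt_trans; [apply (psi_lip t Ht x t Hx1 Ht0)|]. fold K.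
    apply Rle_lt_trans with (K * (eps / (K + 1))).
    + apply Rmult_le_compat_l; auto. lra.
    + replace (K * (eps / (K + 1))) with (eps * (K / (K + 1))) by (field; lra).
      assert (K / (K + 1) < 1).
      { apply Rmult_lt_reg_r with (K + 1); [lra|]. unfold Rdiv. rewrite Rmult_assoc, Rinv_l; lra. }
      nra.
Qed.

Lemma psi_approx : forall eps, 0 < eps -> exists N, forall n, (N <= n)%nat -> Rabs (f n - psi (INR n)) < eps.
Proof.
  intros eps Heps.
  destruct (Phi_small A B C e HA HB HC He (eps / 2) ltac:(lra)) as [Xe [HXe2 HXe]].
  destruct (nat_above (Xs + Xe / g + 2)) as [N HN].
  exists N. intros n Hn. specialize (HN n Hn).
  assert (HXs0 : 0 <= Xs + Xe / g).
  { destruct (Xe_facts Xe HXe2 (Xs + Xe / g) (Rle_refl _)). destruct g_facts. nra. }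
  assert (Ht : 0 < INR n) by lra.
  assert (E : gk (INR n) 0 = f n) by (unfold gk, nk; simpl; rewrite Rmult_1_r, fl_INR; reflexivity).
  destruct (nk_spec (INR n) 1 Ht) as [N1 N2].
  assert (Hb : INR n <= INR n * b ^ 1) by (simpl; rewrite Rmult_1_r; pose proof b_gt1; nra).
  assert (Hk1 : Xs + Xe / g <= INR (nk (INR n) 1)) by lra.
  destruct (Xe_facts Xe HXe2 _ Hk1) as [Hk2 Hk3].
  pose proof (psi_close (INR n) 0 Ht Hk2) as Hc. rewrite E in Hc.
  specialize (HXe _ Hk3). rewrite Rabs_minus_sym. unfold Psi in Hc. lra.
Qed.

End Psi.

Lemma vw_mono p a i K m : is_pmf_family p -> (1 <= i)%nat ->
  visit_within p a i K m <= visit_within p a i (S K) m.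
Proof.
  intros Hpmf Hi. revert m. induction K; intros m.
  - simpl. destruct (Nat.eqb m i); [lra|].
    destruct (Nat.leb_spec m a); [lra|].
    apply sum_nonneg. intros j _. destruct (Hpmf m ltac:(lia)) as [H0 _].
    destruct (vw_bounds p a i Hpmf Hi 0 j). specialize (H0 j). apply Rmult_le_pos; auto.
  - change (visit_within p a i (S K) m <= visit_within p a i (S (S K)) m).
    simpl. destruct (Nat.eqb m i); [lra|]. destruct (Nat.leb_spec m a); [lra|].
    apply sum_le. intros j _. destruct (Hpmf m ltac:(lia)) as [H0 _]. specialize (H0 j).
    specialize (IHK j). apply Rmult_le_compat_l; auto.
Qed.

Definition pistar p a i (n : nat) : R :=
  epsilon (inhabits 0) (fun l => Un_cv (fun K => visit_within p a i K n) l).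

Lemma pistar_cv p a i : is_pmf_family p -> (1 <= i)%nat ->
  forall n, (1 <= n)%nat -> Un_cv (fun K => visit_within p a i K n) (pistar p a i n).
Proof.
  intros Hpmf Hi n _. unfold pistar. apply epsilon_spec.
  destruct (growing_cv (fun K => visit_within p a i K n)) as [l Hl].
  - intros K. apply vw_mono; auto.
  - exists 1. intros x [K HK]. subst. apply (vw_bounds p a i Hpmf Hi).
  - exists l; exact Hl.
Qed.

Theorem theorem2p3 (p : nat -> nat -> R) (alpha : R) (a : nat) :
  condition1 p alpha -> (1 <= a)%nat ->
  forall i : nat, (1 <= i)%nat ->
    exists psi : R -> R,
      (forall t, 0 < t -> continuity_pt psi t) /\
      locally_lipschitz_pos psi /\
      (forall t, 0 < t -> psi (alpha * t) = psi t) /\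
      (* pi_i(n) = lim_K visit_within p a i K n *)
      forall pi : nat -> R,
        (forall n, (1 <= n)%nat -> Un_cv (fun K => visit_within p a i K n) (pi n)) ->
        Un_cv (fun n => pi n - psi (INR n)) 0.
Proof.
  intros Hc1 _ i Hi.
  destruct Hc1 as [Hpmf [_ [Hmono [Ha [e [delta [He [[C1 [N1 [_ HC1]]] [[C2 [N2 HC2]] [C3 [N3 [_ HC3]]]]]]]]]]]].
  set (ps := pistar p a i).
  assert (Hps := pistar_cv p a i Hpmf Hi).
  destruct (D_bound p alpha a i ps delta e C1 C2 C3 N1 N2 N3 Hpmf Hi Hps Hmono Ha He HC1 HC2 HC3)
    as [L [n0 [Hn0 [_ [HL HD]]]]].
  destruct (stepB_bound p alpha a i ps delta e C1 C3 N1 N3 Hpmf Hi Hps Ha He HC1 HC3 L n0 HL Hn0 HD)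
    as [Ms0 HMs0].
  set (cB := 4 * L / alpha + Rabs C3).
  assert (HcB : 0 <= cB).
  { unfold cB. pose proof (Rabs_pos C3).
    assert (0 <= 4 * L / alpha) by (apply Rmult_le_pos; [lra| left; apply Rinv_0_lt_compat; lra]). lra. }
  destruct (potential ((1 + alpha) / 2) e C1 cB N1 delta ltac:(lra) He HcB HC1)
    as [A [B [C [NP [HA [HB [HC HP]]]]]]].
  set (f := ff ps).
  assert (Hstep : forall m r, (max Ms0 NP <= m)%nat -> Rabs (INR r - alpha * INR m) <= 1 ->
    Rabs (f m - f r) <= Phi A B C e ((1 + alpha) / 2 * INR m) - Phi A B C e (INR m)).
  { intros m r Hm Hr. eapply Rle_trans; [apply HMs0; auto; lia|]. apply HP. lia. }
  assert (Hlip : forall u v M, (n0 <= u)%nat -> (n0 <= v)%nat -> 0 < M -> M <= INR u -> M <= INR v ->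
    Rabs (f u - f v) <= L * Rabs (INR u - INR v) / M).
  { apply (lip_sym f L n0 HL Hn0). exact HD. }
  exists (psi f alpha).
  split; [|split; [|split]].
  - intros t Ht. exact (psi_cont f alpha A B C e L n0 (max Ms0 NP) Ha HA HB HC He HL Hn0 Hlip Hstep t Ht).
  - intros t Ht. exists (t / 2), (4 * L / t). split; [lra|]. split.
    + apply Rmult_le_pos; [lra| left; apply Rinv_0_lt_compat; lra].
    + intros x y Hx Hy. exact (psi_lip f alpha A B C e L n0 (max Ms0 NP) Ha HA HB HC He HL Hn0 Hlip Hstep t Ht x y Hx Hy).
  - intros t Ht. exact (psi_per f alpha A B C e n0 (max Ms0 NP) Ha HA HB HC He Hn0 Hstep t Ht).
  - intros pi Hpi eps Heps.
    destruct (psi_approx f alpha A B C e n0 (max Ms0 NP) Ha HA HB HC He Hn0 Hstep eps Heps) as [N HN].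
    exists (max N 1). intros n Hn.
    assert (E : pi n = f n).
    { unfold f, ff. destruct n; [lia|]. eapply UL_sequence; [apply Hpi; lia| apply Hps; lia]. }
    unfold Rdist. rewrite Rminus_0_r, E. apply HN. lia.
Qed.
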